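(* Let $A$ be a finite alphabet, let $\sigma : A^\star \to A^\star$ be a morphism and let $w\in A^\star$ be such that for every $a\in A$ there exists $m\in\mathbb{N}$ such that the letter $a$ occurs in $\sigma^m(w)$. Then $$|\sigma^n(w)| \asymp \sum_{a\in A} |\sigma^n(a)|$$ as $n\to\infty$.
   Context: $A^\star$ is the free monoid of finite words over $A$; a morphism satisfies $\sigma(uv)=\sigma(u)\sigma(v)$; $\sigma^n$ is the $n$-th iterate; $|u|$ is the length of $u$. For $f,g:\mathbb{N}\to\mathbb{C}$, $f(n) \preceq g(n)$ means there is a real $\lambda>0$ such that the set $\{n\in\mathbb{N} : |f(n)| > \lambda |g(n)|\}$ is finite, and $f(n)\asymp g(n)$ means both $f(n)\preceq g(n)$ and $g(n)\preceq f(n)$. *)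

(* Defs.v *)
From mathcomp Require Import all_boot.
From Stdlib Require Import Reals.

Set Implicit Arguments.
Unset Strict Implicit.
Unset Printing Implicit Defensive.

Definition is_morphism (A : Type) (sigma : seq A -> seq A) : Prop :=
  forall u v : seq A, sigma (u ++ v) = sigma u ++ sigma v.

(* f ⪯ g : exists real lambda > 0 such that {n | |f n| > lambda |g n|} is finite.
   For nat-valued f, g, |.| is the identity; "finite subset of N" is stated as
   "bounded", i.e. contained in [0, N). *)
Definition preceq (f g : nat -> nat) : Prop :=
  exists lambda : R, (0 < lambda)%R /\
    exists N : nat, forall n : nat, (N <= n)%N -> ~ (INR (f n) > lambda * INR (g n))%R.

Definition asymp (f g : nat -> nat) : Prop := preceq f g /\ preceq g f.

(* Main.v *)
Require Import Defs.
From mathcomp Require Import all_boot.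
From Stdlib Require Import Reals.

Section Aux.
Variable A : finType.

Lemma morph_nil (tau : seq A -> seq A) : is_morphism tau -> tau [::] = [::].
Proof.
move=> H; have := congr1 size (H [::] [::]); rewrite /= size_cat.
move=> /eqP; rewrite -{1}(add0n (size (tau [::]))) eqn_add2r eq_sym size_eq0 => /eqP //.
Qed.

Lemma morph_size (tau : seq A -> seq A) : is_morphism tau ->
  forall s, size (tau s) = \sum_(x <- s) size (tau [:: x]).
Proof.
move=> H; elim=> [|x s IH]; first by rewrite big_nil (morph_nil _ H).
by rewrite big_cons -IH -size_cat -H.
Qed.

Lemma iter_morph (sigma : seq A -> seq A) n : is_morphism sigma -> is_morphism (iter n sigma).
Proof.
move=> H; elim: n => [//|n IH] u v /=; by rewrite IH H.
Qed.

Lemma sum_le_total (f : A -> nat) (s : seq A) :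
  \sum_(x <- s) f x <= size s * \sum_(a : A) f a.
Proof.
elim: s => [|x s IH]; first by rewrite big_nil.
rewrite big_cons mulSn leq_add //.
by rewrite (bigD1 x) //= leq_addr.
Qed.

Lemma mem_le (f : A -> nat) (s : seq A) a : a \in s -> f a <= \sum_(x <- s) f x.
Proof.
elim: s => [//|x s IH]; rewrite inE big_cons => /orP [/eqP->|/IH h].
  exact: leq_addr.
exact: leq_trans h (leq_addl _ _).
Qed.

Lemma iter_size (sigma : seq A -> seq A) : is_morphism sigma ->
  forall m s, size (iter m sigma s) <= expn (\sum_(b : A) size (sigma [:: b])) m * size s.
Proof.
move=> H; elim=> [|m IH] s /=; first by rewrite mul1n.
rewrite (@morph_size _ H) expnSr -mulnA mulnC.
apply: leq_trans (sum_le_total _ _) _.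
apply: (leq_trans (leq_mul (IH s) (leqnn _))). by rewrite mulnAC [X in _ <= X]mulnAC [expn _ _ * _]mulnC.
Qed.

Lemma sum_bound (f g : nat -> A -> nat) (h : nat -> nat) (l : seq A) :
  (forall a, exists C, forall n, f n a <= C * h n) ->
  exists C, forall n, \sum_(a <- l) f n a <= C * h n.
Proof.
move=> Hf; elim: l => [|a l [C IH]]; first by exists 0 => n; rewrite big_nil.
have [Ca Ha] := Hf a; exists (Ca + C) => n.
by rewrite big_cons mulnDl leq_add.
Qed.

End Aux.
Arguments morph_size {A tau}.
Arguments iter_morph {A sigma}.
Arguments iter_size {A sigma}.
Arguments morph_nil {A tau}.

Lemma nat_to_R (f g : nat -> nat) C : (forall n, f n <= C * g n) -> preceq f g.
Proof.
move=> H; exists (INR C.+1); split; first by apply: lt_0_INR; apply/ltP.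
exists 0 => n _; apply: Rle_not_lt.
rewrite -mult_INR; apply: le_INR; apply/leP.
apply: leq_trans (H n) _; exact: leq_mul (leqnSn C) (leqnn _).
Qed.

Theorem lemma2 (A : finType) (sigma : seq A -> seq A) (w : seq A) :
  is_morphism sigma ->
  (forall a : A, exists m : nat, a \in iter m sigma w) ->
  asymp (fun n => size (iter n sigma w))
        (fun n => \sum_(a : A) size (iter n sigma [:: a])).
Proof.
move=> Hm Hw; split.
  apply: (@nat_to_R _ _ (size w)) => n.
  rewrite (morph_size (iter_morph n Hm)).
  exact: sum_le_total.
have [|C HC] := @sum_bound A (fun n a => size (iter n sigma [:: a]))
   (fun n a => 0) (fun n => size (iter n sigma w)) (index_enum A); last first.
  apply: (@nat_to_R _ _ C) => n; exact: HC.
  move=> a; have [m Ha] := Hw a.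
  exists (expn (\sum_(b : A) size (sigma [:: b])) m) => n.
  apply: leq_trans (iter_size Hm m _).
  have -> : iter m sigma (iter n sigma w) = iter n sigma (iter m sigma w).
    by rewrite -!iterD addnC.
  rewrite [X in _ <= X](morph_size (iter_morph n Hm)).
exact: (@mem_le A (fun x => size (iter n sigma [:: x])) _ a Ha).
Qed.
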